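(* For every $U\in\mathcal U_n$, the word $q(U)$ produced by the algorithm below is the area sequence of a Dyck path of length $n$, i.e. $q(U)=(a_1,\dots,a_n)$ with $a_1=0$ and $a_i\le a_{i-1}+1$ for $2\le i\le n$.
   Context: A unit interval order on $\{1,\dots,n\}$ is a relation $\prec$ such that there are closed intervals $I_1,\dots,I_n$ of length $1$ in $\mathbb R$, numbered from left to right, with $i\prec j$ iff $I_i$ lies strictly to the left of $I_j$; $\mathcal U_n$ is the set of these. Levels: set $\ell(1)=0$ and, for $j\ge 2$, $\ell(j)=\max_{i\prec j}\ell(i)+1$, with $\ell(j)=0$ if no $i\prec j$. Algorithm: define words $q_1,\dots,q_n$, $q_i$ of length $i$, with $q_1=(0)$. Given $q_{i-1}$, let $C_i$ be the number of elements $k$ with $k\prec i$ and $\ell(k)=\ell(i)-1$. Then $q_i$ is obtained from $q_{i-1}$ by inserting a letter $\ell(i)$ directly after the (possibly empty) run of letters $\ell(i)$ that immediately follows the $C_i$-th occurrence of the letter $\ell(i)-1$ in $q_{i-1}$ (when $C_i=0$, the ''0-th occurrence'' is understood as the start of the word). Set $q(U)=q_n$. The area sequence of a Dyck path lists, row by row from bottom to top, the number of full unit boxes between the path and the diagonal; these are exactly the sequences described in the claim. *)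

(* Defs.v *)
From Stdlib Require Import Reals.
From mathcomp Require Import all_boot.
Set Implicit Arguments. Unset Strict Implicit. Unset Printing Implicit Defensive.

(* prec : rel nat is a unit interval order on {1,...,n}: there are closed unit
   intervals I_i = [x i, x i + 1], numbered from left to right (left endpoints
   nondecreasing), such that for i, j in {1..n}, i prec j iff I_i lies strictly
   to the left of I_j, i.e. x i + 1 < x j. *)
Definition is_unit_interval_order (n : nat) (prec : rel nat) : Prop :=
  exists x : nat -> R,
    (forall i, 1 <= i -> i < n -> Rle (x i) (x i.+1)) /\
    (forall i j, 1 <= i <= n -> 1 <= j <= n ->
       (prec i j <-> Rlt (Rplus (x i) R1) (x j))).

(* levs prec k = [:: l(1); ...; l(k)], with
   l(j) = max_{i prec j} l(i) + 1, and l(j) = 0 if no i prec j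
   (the predecessors of j are among 1..j-1). *)
Fixpoint levs (prec : rel nat) (k : nat) : seq nat :=
  match k with
  | 0 => [::]
  | k'.+1 =>
      let L := levs prec k' in
      rcons L (foldr maxn 0
                 [seq (nth 0 L i.-1).+1 | i <- iota 1 k' & prec i k'.+1])
  end.

Definition level (prec : rel nat) (j : nat) : nat := nth 0 (levs prec j) j.-1.

(* C_i = #{ k : k prec i, l(k) = l(i) - 1 } (k ranges over 1..i-1). When
   l(i) = 0 there is no k prec i, so C_i = 0. *)
Definition Ccount (prec : rel nat) (i : nat) : nat :=
  count (fun k => prec k i && (level prec k == (level prec i).-1)) (iota 1 i.-1).

(* Index (0-based) just after the c-th occurrence of letter b in w;
   0 when c = 0 (start of the word). *)
Fixpoint after_occ (b c : nat) (w : seq nat) : nat :=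
  match w with
  | [::] => 0
  | x :: w' =>
      if c is 0 then 0
      else if x == b then (if c == 1 then 1 else (after_occ b c.-1 w').+1)
      else (after_occ b c w').+1
  end.

(* Insert letter a directly after the (possibly empty) run of letters a that
   immediately follows the c-th occurrence of a - 1 in w. *)
Definition insert_step (w : seq nat) (a c : nat) : seq nat :=
  let p0 := after_occ a.-1 c w in
  let p := p0 + find (fun y => y != a) (drop p0 w) in
  take p w ++ a :: drop p w.

Fixpoint qword (prec : rel nat) (i : nat) : seq nat :=
  match i with
  | 0 => [::]
  | 1 => [:: 0]
  | i'.+1 => insert_step (qword prec i') (level prec i) (Ccount prec i)
  end.

Definition qU (n : nat) (prec : rel nat) : seq nat := qword prec n.

(* Main.v *)
Require Import Defs.
From Stdlib Require Import Reals.
From mathcomp Require Import all_boot.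
From mathcomp Require Import zify.

Definition Rar : rel nat := fun x y => y <= x.+1.

Lemma after_occ0 b w : after_occ b 0 w = 0.
Proof. by case: w. Qed.

Lemma after_occP b w c : 0 < c <= count (pred1 b) w ->
  let p := after_occ b c w in [/\ 0 < p, p <= size w & nth 0 w p.-1 = b].
Proof.
elim: w c => [|x w IH] [|c] //= hc.
case: eqP hc => [xb|xb] hc.
  case: c hc => [|c] hc /=; first by rewrite xb.
  have /IH[h1 h2 h3] : 0 < c.+1 <= count (pred1 b) w by apply/andP; split => //; lia.
  by split => //; case: (after_occ b c.+1 w) h1 h3.
have /IH[h1 h2 h3] : 0 < c.+1 <= count (pred1 b) w.
  by apply/andP; split => //; move: hc; rewrite add0n.
by split => //; case: (after_occ b c.+1 w) h1 h3.
Qed.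

Lemma insert_good w a c : path Rar 0 w -> nth 0 w 0 = 0 -> 0 < size w ->
  (c = 0 /\ a = 0 \/ 0 < c <= count (pred1 a.-1) w) ->
  path Rar 0 (insert_step w a c) /\ nth 0 (insert_step w a c) 0 = 0.
Proof.
move=> hp h0 hs hc.
rewrite /insert_step.
set p0 := after_occ _ _ _; set p := _ + _.
have [hp1 hp2 hp3] : [/\ 0 < p, p <= size w & (nth 0 w p.-1 = a.-1 \/ nth 0 w p.-1 = a)].
  case: hc => [[ec ea]|hc].
    rewrite /p /p0 ec ea after_occ0 add0n drop0.
    case: w hp h0 hs {p0 p} => [|x w] //= _ -> _.
    split => //; first by rewrite ltnS find_size.
    right; have := @before_find _ 0 (fun y => y != 0) (0 :: w); rewrite /=.
    case E: (find _ w) => [|f] hb //=.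
    by apply/eqP; move: (hb f.+1 (ltnSn _)); rewrite /= => /negbFE.
  have [h1 h2 h3] := @after_occP _ _ _ hc.
  rewrite -/p0 in h1 h2 h3.
  have hf := find_size (fun y => y != a) (drop p0 w).
  rewrite size_drop in hf.
  split; first by rewrite /p; lia.
    by rewrite /p -(subnKC h2) leq_add2l.
  rewrite /p; case E: (find _ _) => [|f]; first by rewrite addn0; left.
  right; have := @before_find _ 0 (fun y => y != a) (drop p0 w) f; rewrite E ltnSn nth_drop => /(_ isT) /negbFE /eqP.
  by rewrite addnS.
have hsz : size (take p w) = p.
    by rewrite size_take; case: ltnP => // h; apply/eqP; rewrite eqn_leq h hp2.
have hl : last 0 (take p w) = nth 0 w p.-1.
  by rewrite -nth_last hsz nth_take // ltn_predL.
have hlA : a <= (last 0 (take p w)).+1 /\ last 0 (take p w) <= a.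
  by rewrite hl; case: hp3 => ->; lia.
split.
  move: hp; rewrite -{1}(cat_take_drop p w) !cat_path => /andP[-> h2] /=.
  apply/andP; split; first by rewrite /Rar; lia.
  case: (drop p w) h2 => [|y v] //= /andP[hy ->]; rewrite andbT /Rar; move: hy; rewrite /Rar; lia.
by rewrite nth_cat hsz hp1 nth_take.
Qed.

Lemma size_levs prec k : size (levs prec k) = k.
Proof. by elim: k => //= k IH; rewrite size_rcons IH. Qed.

Lemma level_S0 prec k : level prec k.+1 =
  foldr maxn 0 [seq (nth 0 (levs prec k) i.-1).+1 | i <- iota 1 k & prec i k.+1].
Proof. by rewrite /level /= nth_rcons size_levs ltnn eqxx. Qed.

Lemma levs_map prec k : levs prec k = map (level prec) (iota 1 k).
Proof.
elim: k => // k IH.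
by rewrite -addn1 iotaD map_cat cats1 add1n -IH addn1 level_S0.
Qed.

Lemma level_S prec k : level prec k.+1 =
  foldr maxn 0 [seq (level prec i).+1 | i <- iota 1 k & prec i k.+1].
Proof.
rewrite level_S0 levs_map; congr (foldr maxn 0 _); apply/eq_in_map => i.
rewrite mem_filter mem_iota => /andP[_ /andP[h1 h2]].
rewrite (nth_map 0) ?size_iota ?nth_iota; try lia.
by congr (level _ _).+1; lia.
Qed.

Lemma foldr_max_mem (s : seq nat) : 0 < foldr maxn 0 s -> foldr maxn 0 s \in s.
Proof.
elim: s => //= x s IH; case: (leqP x (foldr maxn 0 s)) => h.
  by move=> hp; rewrite in_cons IH ?orbT.
by rewrite in_cons eqxx.
Qed.

Lemma count_ins (P : pred nat) w a p :
  count P (take p w ++ a :: drop p w) = P a + count P w.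
Proof.
by rewrite count_cat /= addnCA -count_cat cat_take_drop.
Qed.

Lemma qword_inv prec i : 0 < i ->
  [/\ size (qword prec i) = i, path Rar 0 (qword prec i),
      nth 0 (qword prec i) 0 = 0 &
      forall b, count (pred1 b) (qword prec i) =
                count (fun k => level prec k == b) (iota 1 i)].
Proof.
elim: i => // [[|i] IH] _.
  by split => // b /=; rewrite eq_sym.
have [h1 h2 h3 h4] := IH isT.
change (qword prec i.+2) with
  (insert_step (qword prec i.+1) (level prec i.+2) (Ccount prec i.+2)).
set a := level prec i.+2; set c := Ccount prec i.+2.
have hc : c = 0 /\ a = 0 \/ 0 < c <= count (pred1 a.-1) (qword prec i.+1).
  case: (posnP a) => ha.
    case: (posnP c) => hc0; first by left.
    right; apply/andP; split => //; rewrite h4 /c /Ccount -/a.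
    by apply: sub_count => k /andP[].
  right; apply/andP; split.
    rewrite /c /Ccount -/a -has_count.
    have := @foldr_max_mem [seq (level prec j).+1 | j <- iota 1 i.+1 & prec j i.+2].
    rewrite -level_S -/a => /(_ ha) /mapP [j].
    rewrite mem_filter => /andP[hp hj] ea.
    by apply/hasP; exists j => //; rewrite hp ea /= eqxx.
  rewrite h4 /c /Ccount -/a.
  by apply: sub_count => k /andP[].
have hs : 0 < size (qword prec i.+1) by rewrite h1.
have [g1 g2] := @insert_good _ _ _ h2 h3 hs hc.
split => //.
  by rewrite /insert_step size_cat /= addnS -size_cat cat_take_drop h1.
move=> b; rewrite /insert_step count_ins h4 -(addn1 i.+1) iotaD count_cat /= addn0 addnC add1n.
by [].
Qed.

Theorem mainTheorem4 (n : nat) (prec : rel nat) :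
  1 <= n -> is_unit_interval_order n prec ->
  let q := qU n prec in
  [/\ size q = n,
      nth 0 q 0 = 0 &
      forall i, 1 <= i < n -> nth 0 q i <= (nth 0 q i.-1).+1].
Proof.
move=> hn _ /=; rewrite /qU.
have [h1 h2 h3 _] := @qword_inv prec n hn.
split => // [[|i]] // /andP[_ hi].
by move/pathP: h2 => /(_ 0 i.+1); rewrite h1 => /(_ hi).
Qed.
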